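(* Under the setting described in the context, let $m^*$ be a Nash equilibrium, and put $l^*_{ij}=l_{ij}(m^* )$, $\hat a^*_j=\hat a_j(m^* )$. Then for every $i\in\mathcal N$ and every $\bar a_{\mathcal R_i}=(\bar a_j)_{j\in\mathcal R_i}\in\mathbb R^{\mathcal R_i}$, $u_i^A\Big(\bar a_{\mathcal R_i},\ \sum_{j\in\mathcal R_i}l^*_{ij}\bar a_j\Big)\ \le\ u_i^A\Big((\hat a^*_j)_{j\in\mathcal R_i},\ \sum_{j\in\mathcal R_i}l^*_{ij}\hat a^*_j\Big)$; that is, $(\hat a^*_j)_{j\in\mathcal R_i}$ maximizes $-\sum_{j\in\mathcal R_i}l^*_{ij}\bar a_j+u_i(\bar a_{\mathcal R_i})$ over $\bar a_i\in\mathcal A_i$, $\bar a_j\in\mathbb R$ ($j\in\mathcal R_i\setminus\{i\}$). Moreover $\sum_{k\in\mathcal C_j}l^*_{kj}=0$ for every $j\in\mathcal N$.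
   Context: Let $N\ge 1$ and $\mathcal N=\{1,\dots,N\}$. For each $i\in\mathcal N$ a set $\mathcal R_i\subseteq\mathcal N$ with $i\in\mathcal R_i$ is given; for $j\in\mathcal N$ put $\mathcal C_j=\{k\in\mathcal N: j\in\mathcal R_k\}$, and assume $|\mathcal C_j|\ge 3$ for all $j$. Each $\mathcal A_i\subset\mathbb R$ is a nonempty convex compact set with $0\in\mathcal A_i$. For each $i$, $u_i:\mathbb R^{\mathcal R_i}\to\mathbb R\cup\{-\infty\}$ is concave, real-valued whenever $a_i\in\mathcal A_i$, and $-\infty$ whenever $a_i\notin\mathcal A_i$. Aggregate utility: $u_i^A(a_{\mathcal R_i},t_i)=-t_i+u_i(a_{\mathcal R_i})$ if $a_i\in\mathcal A_i$, else $-\infty$. Game form: message $m_i=({}^ia_{\mathcal R_i},{}^i\pi_{\mathcal R_i})\in\mathcal M_i=\mathbb R^{\mathcal R_i}\times\mathbb R_+^{\mathcal R_i}$; $\hat a_i(m)=\frac1{|\mathcal C_i|}\sum_{k\in\mathcal C_i}{}^ka_i$. For each $j$ fix a bijection $\mathcal I_{\cdot j}:\mathcal C_j\to\{1,\dots,|\mathcal C_j|\}$, write $\mathcal C_{j(k)}$ for the user with index $k$ in $\mathcal C_j$, indices cyclic modulo $|\mathcal C_j|$. For $i\in\mathcal N$, $j\in\mathcal R_i$ let $i^+=\mathcal C_{j(\mathcal I_{ij}+1)}$, $i^{++}=\mathcal C_{j(\mathcal I_{ij}+2)}$, $l_{ij}(m)={}^{i^+}\pi_j-{}^{i^{++}}\pi_j$,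 and $\hat t_i(m)=\sum_{j\in\mathcal R_i}\Big[l_{ij}(m)\hat a_j(m)+{}^i\pi_j({}^ia_j-{}^{i^+}a_j)^2-{}^{i^+}\pi_j({}^{i^+}a_j-{}^{i^{++}}a_j)^2\Big]$. A Nash equilibrium is $m^*$ such that for all $i$ and $m_i\in\mathcal M_i$, $u_i^A\big((\hat a_j(m^* ))_{j\in\mathcal R_i},\hat t_i(m^* )\big)\ge u_i^A\big((\hat a_j(m_i,m^*_{-i}))_{j\in\mathcal R_i},\hat t_i(m_i,m^*_{-i})\big)$. *)

(* Defs.v *)
From mathcomp Require Import all_boot.
From Stdlib Require Import Reals Rtopology ClassicalEpsilon.
Set Implicit Arguments. Unset Strict Implicit. Unset Printing Implicit Defensive.

(* Users are 'I_N = {0,...,N-1} (standing for {1,...,N}).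
   Rs i : {set 'I_N} is the set R_i. *)

Definition Cset (N : nat) (Rs : 'I_N -> {set 'I_N}) (j : 'I_N) : {set 'I_N} :=
  [set k | j \in Rs k].

(* Extended reals  R u {-oo}: None = -oo. *)
Definition ereal := option R.
Definition ele (x y : ereal) : Prop :=
  match x, y with
  | None, _ => True
  | Some _, None => False
  | Some a, Some b => (a <= b)%R
  end.

(* Aggregate utility u_i^A(a, t) = -t + u_i(a) if a_i in A_i, else -oo.
   Action profiles are functions 'I_N -> R; u_i depends only on the
   coordinates in R_i (locality hypothesis in the theorem). *)
Definition uA (N : nat) (A : 'I_N -> R -> Prop) (u : 'I_N -> ('I_N -> R) -> R)
  (i : 'I_N) (a : 'I_N -> R) (t : R) : ereal :=
  if excluded_middle_informative (A i (a i)) then Some (- t + u i a)%R else None.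

(* The bijection I_{.j} : C_j -> {1..|C_j|} is given by a duplicate-free
   enumeration ord j of C_j: the user with (0-based) index n is nth (ord j) n,
   and I_{ij} = index i (ord j). *)
Definition cyc (N : nat) (ord : 'I_N -> seq 'I_N) (d : nat) (i j : 'I_N) : 'I_N :=
  nth i (ord j) ((index i (ord j) + d) %% size (ord j)).

(* Message profile m: ma k j = ^k a_j,  mp k j = ^k pi_j  (meaningful for j in R_k). *)
Definition ahat (N : nat) (Rs : 'I_N -> {set 'I_N}) (ma : 'I_N -> 'I_N -> R)
  (j : 'I_N) : R :=
  (/ INR #|Cset Rs j| * \big[Rplus/0%R]_(k in Cset Rs j) ma k j)%R.

Definition lij (N : nat) (ord : 'I_N -> seq 'I_N) (mp : 'I_N -> 'I_N -> R)
  (i j : 'I_N) : R :=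
  (mp (cyc ord 1 i j) j - mp (cyc ord 2 i j) j)%R.

Definition that (N : nat) (Rs : 'I_N -> {set 'I_N}) (ord : 'I_N -> seq 'I_N)
  (ma mp : 'I_N -> 'I_N -> R) (i : 'I_N) : R :=
  \big[Rplus/0%R]_(j in Rs i)
    (lij ord mp i j * ahat Rs ma j
     + mp i j * (ma i j - ma (cyc ord 1 i j) j) ^ 2
     - mp (cyc ord 1 i j) j * (ma (cyc ord 1 i j) j - ma (cyc ord 2 i j) j) ^ 2)%R.

Definition upd (N : nat) (m : 'I_N -> 'I_N -> R) (i : 'I_N) (mi : 'I_N -> R) :
  'I_N -> 'I_N -> R := fun k => if k == i then mi else m k.

Definition is_NE (N : nat) (Rs : 'I_N -> {set 'I_N}) (ord : 'I_N -> seq 'I_N)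
  (A : 'I_N -> R -> Prop) (u : 'I_N -> ('I_N -> R) -> R)
  (ma mp : 'I_N -> 'I_N -> R) : Prop :=
  (forall k j, j \in Rs k -> (0 <= mp k j)%R) /\
  forall (i : 'I_N) (mai mpi : 'I_N -> R),
    (forall j, j \in Rs i -> (0 <= mpi j)%R) ->
    ele (uA A u i (ahat Rs (upd ma i mai)) (that Rs ord (upd ma i mai) (upd mp i mpi) i))
        (uA A u i (ahat Rs ma) (that Rs ord ma mp i)).

(* Main.v *)
Require Import Defs.
From mathcomp Require Import all_boot.
From Stdlib Require Import Reals Rtopology.
From mathcomp Require Import zify.
From Stdlib Require Import Lra ClassicalEpsilon.
From HB Require Import structures.

HB.instance Definition _ := Monoid.isComLaw.Build R 0%R Rplus (fun a b c => esym (Rplus_assoc a b c)) Rplus_comm Rplus_0_l.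

Lemma cyc_neq (N : nat) (ord : 'I_N -> seq 'I_N) d i j :
  uniq (ord j) -> i \in ord j -> (3 <= size (ord j))%N -> (0 < d)%N -> (d < 3)%N ->
  cyc ord d i j != i.
Proof.
move=> U Hi Hs Hd1 Hd2; rewrite /cyc.
set n := size (ord j).
have Hix : (index i (ord j) < n)%N by rewrite index_mem.
rewrite -[X in _ != X](nth_index i Hi) nth_uniq //; last by rewrite ltn_mod; lia.
apply/eqP => E; move: E.
have -> : ((index i (ord j) + d) %% n = if (index i (ord j) + d < n)%N then index i (ord j) + d else index i (ord j) + d - n)%N.
  case: ifP => h; first by rewrite modn_small.
  rewrite -(modn_small (m:= index i (ord j) + d - n) (d:=n)); last by lia.
  rewrite -{1}(subnK (m:=n) (n:=index i (ord j) + d)); last by lia.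
  by rewrite modnDr.
case: ifP => h; lia.
Qed.

Lemma cyc_perm (N : nat) (ord : 'I_N -> seq 'I_N) d j :
  uniq (ord j) -> perm_eq [seq cyc ord d k j | k <- ord j] (ord j).
Proof.
move=> U.
set s := ord j.
have Hsub : {subset [seq cyc ord d k j | k <- s] <= s}.
  move=> x /mapP [k Hk ->]; rewrite /cyc -/s; apply: mem_nth.
  rewrite ltn_mod; by case: s Hk {U}.
have Hu : uniq [seq cyc ord d k j | k <- s].
  rewrite map_inj_in_uniq // => x y Hx Hy; rewrite /cyc -/s => E.
  have Hn : (0 < size s)%N by case: (s) Hx.
  move: E; rewrite [in RHS](set_nth_default x) ?ltn_mod //; move/eqP; rewrite nth_uniq ?ltn_mod //.
  rewrite eqn_modDr => /eqP.
  rewrite !modn_small ?index_mem // => Ei.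
  by rewrite -(nth_index x Hx) -(nth_index x Hy) Ei.
have [_ E] := uniq_min_size Hu Hsub (eq_leq (esym (size_map _ _))).
by apply: uniq_perm.
Qed.

Lemma sum_sub (I : finType) (P : pred I) (F G : I -> R) :
  \big[Rplus/0%R]_(i | P i) (F i - G i)%R =
  (\big[Rplus/0%R]_(i | P i) F i - \big[Rplus/0%R]_(i | P i) G i)%R.
Proof.
apply: (Rplus_eq_reg_r (\big[Rplus/0%R]_(i | P i) G i)).
rewrite -big_split /=; ring_simplify; apply: eq_bigr => k _; ring.
Qed.

Lemma sum_add (I : finType) (P : pred I) (F G : I -> R) :
  \big[Rplus/0%R]_(i | P i) (F i + G i)%R =
  (\big[Rplus/0%R]_(i | P i) F i + \big[Rplus/0%R]_(i | P i) G i)%R.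
Proof. by rewrite big_split. Qed.

Lemma sum_ge0 (I : finType) (P : pred I) (F : I -> R) :
  (forall i, P i -> 0 <= F i)%R -> (0 <= \big[Rplus/0%R]_(i | P i) F i)%R.
Proof.
move=> H; apply: (big_ind (fun x => 0 <= x)%R) => //; first exact: Rle_refl.
by move=> x y; apply: Rplus_le_le_0_compat.
Qed.

Lemma sum_cyc (N : nat) (ord : 'I_N -> seq 'I_N) d j (G : 'I_N -> R) :
  uniq (ord j) ->
  \big[Rplus/0%R]_(k <- ord j) G (cyc ord d k j) = \big[Rplus/0%R]_(k <- ord j) G k.
Proof.
move=> U; rewrite -(big_map (fun k => cyc ord d k j) xpredT G).
by apply: perm_big; apply: cyc_perm.
Qed.

Theorem mainTheorem5 (N : nat) (Rs : 'I_N -> {set 'I_N})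
  (ord : 'I_N -> seq 'I_N)
  (A : 'I_N -> R -> Prop) (u : 'I_N -> ('I_N -> R) -> R)
  (ma mp : 'I_N -> 'I_N -> R) :
  (0 < N)%N ->
  (forall i, i \in Rs i) ->
  (forall j, (3 <= #|Cset Rs j|)%N) ->
  (forall j, uniq (ord j) /\ (forall k, (k \in ord j) = (k \in Cset Rs j))) ->
  (forall i, A i 0%R) ->
  (forall i x y t, A i x -> A i y -> (0 <= t <= 1)%R -> A i (t * x + (1 - t) * y)%R) ->
  (forall i, compact (A i)) ->
  (forall i (a b : 'I_N -> R), (forall j, j \in Rs i -> a j = b j) -> u i a = u i b) ->
  (forall i (a b : 'I_N -> R) t, A i (a i) -> A i (b i) -> (0 <= t <= 1)%R ->
     (t * u i a + (1 - t) * u i b <= u i (fun j => t * a j + (1 - t) * b j))%R) ->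
  is_NE Rs ord A u ma mp ->
  (forall (i : 'I_N) (abar : 'I_N -> R),
     ele (uA A u i abar (\big[Rplus/0%R]_(j in Rs i) (lij ord mp i j * abar j)%R))
         (uA A u i (ahat Rs ma)
             (\big[Rplus/0%R]_(j in Rs i) (lij ord mp i j * ahat Rs ma j)%R)))
  /\ (forall j : 'I_N, \big[Rplus/0%R]_(k in Cset Rs j) lij ord mp k j = 0%R).
Proof.
move=> _ HRi HC Hord _ _ _ Hloc _ [Hpos HNE].
have Hsize : forall j, size (ord j) = #|Cset Rs j|.
  move=> j; have [U M] := Hord j.
  rewrite -(card_uniqP U); apply: eq_card => k; by rewrite M.
have Hsum : forall j (F : 'I_N -> R), \big[Rplus/0%R]_(k in Cset Rs j) F k =
      \big[Rplus/0%R]_(k <- ord j) F k.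
  move=> j F; have [U M] := Hord j; rewrite big_uniq //.
  by apply: eq_bigl => k; rewrite M.
split; last first.
  move=> j; rewrite Hsum; have [U M] := Hord j.
  have E1 := @sum_cyc N ord 1 j (fun k => mp k j) U.
  have E2 := @sum_cyc N ord 2 j (fun k => mp k j) U.
  rewrite /lij.
  have := @big_split R 0%R Rplus _ (ord j) xpredT
    (fun k => mp (cyc ord 1 k j) j - mp (cyc ord 2 k j) j)%R (fun k => mp (cyc ord 2 k j) j).
  rewrite /= E2.
  have -> : \big[Rplus/0%R]_(i <- ord j) (mp (cyc ord 1 i j) j - mp (cyc ord 2 i j) j + mp (cyc ord 2 i j) j)%R = \big[Rplus/0%R]_(k <- ord j) mp k j.
    rewrite -E1; apply: eq_bigr => k _; ring.
  move=> H; lra.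
move=> i abar.
have Hcyc : forall j, j \in Rs i -> cyc ord 1 i j != i /\ cyc ord 2 i j != i.
  move=> j Hj; have [U M] := Hord j.
  have Hi : i \in ord j by rewrite M inE.
  have Hs : (3 <= size (ord j))%N by rewrite Hsize.
  by split; apply: cyc_neq.
pose n j := INR #|Cset Rs j|.
have Hn : forall j, n j <> 0%R.
  move=> j; apply: not_0_INR; have := HC j; lia.
pose mai j := (ma i j + n j * (abar j - ahat Rs ma j))%R.
have Hah : forall j, j \in Rs i -> ahat Rs (upd ma i mai) j = abar j.
  move=> j Hj.
  have HiC : i \in Cset Rs j by rewrite inE.
  rewrite /ahat (bigD1 i HiC) /= /upd eqxx.
  have -> : \big[Rplus/0%R]_(k in Cset Rs j | k != i) (if k == i then mai else ma k) j
      = \big[Rplus/0%R]_(k in Cset Rs j | k != i) ma k j.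
    by apply: eq_bigr => k /andP [_ /negbTE ->].
  have E : ahat Rs ma j = (/ n j * (ma i j + \big[Rplus/0%R]_(k in Cset Rs j | k != i) ma k j))%R.
    by rewrite /ahat (bigD1 i HiC).
  rewrite /mai E -/(n j); field; exact: Hn.
pose Q j := (mp (cyc ord 1 i j) j * (ma (cyc ord 1 i j) j - ma (cyc ord 2 i j) j) ^ 2)%R.
pose P j := (mp i j * (ma i j - ma (cyc ord 1 i j) j) ^ 2)%R.
have Hdev : that Rs ord (upd ma i mai) (upd mp i (fun _ => 0%R)) i =
   (\big[Rplus/0%R]_(j in Rs i) (lij ord mp i j * abar j)%R - \big[Rplus/0%R]_(j in Rs i) Q j)%R.
  rewrite /that -sum_sub; apply: eq_bigr => j Hj.
  have [H1 H2] := Hcyc j Hj.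
  rewrite /lij /upd (negbTE H1) (negbTE H2) eqxx Hah // /Q; ring.
have Hm : that Rs ord ma mp i =
   (\big[Rplus/0%R]_(j in Rs i) (lij ord mp i j * ahat Rs ma j)%R + \big[Rplus/0%R]_(j in Rs i) P j
     - \big[Rplus/0%R]_(j in Rs i) Q j)%R.
  by rewrite /that -sum_add -sum_sub.
have HP : (0 <= \big[Rplus/0%R]_(j in Rs i) P j)%R.
  apply: sum_ge0 => j Hj; apply: Rmult_le_pos; first exact: Hpos.
  rewrite /= Rmult_1_r; apply: Rle_0_sqr.
have Hu : u i (ahat Rs (upd ma i mai)) = u i abar by apply: Hloc.
have := HNE i mai (fun _ => 0%R) (fun _ _ => Rle_refl 0).
rewrite Hdev Hm /uA.
have Hai : ahat Rs (upd ma i mai) i = abar i by apply: Hah.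
rewrite Hai Hu.
case: (excluded_middle_informative (A i (abar i))) => Ha //=.
case: (excluded_middle_informative (A i (ahat Rs ma i))) => Hb //=.
move=> H.
set X := \big[Rplus/0%R]_(j in Rs i) P j in H HP.
set Y := \big[Rplus/0%R]_(j in Rs i) Q j in H.
lra.
Qed.
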